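(* Let $P$ be a closed term of sort $(k,l)$ and $Q$ a closed term of sort $(l,m)$. (i) If $P\mathrel{;}Q\xrightarrow[\vec b]{\vec a}R$ then $R=P'\mathrel{;}Q'$ for some terms $P',Q'$, and there exist $n,p\ge0$, words $\vec d_1,\dots,\vec d_n,\vec c,\vec e_1,\dots,\vec e_p\in L^l$ and terms $P_0=P,P_1,\dots,P_n$, $P'_0,\dots,P'_p=P'$, $Q_0=Q,Q_1,\dots,Q_n$, $Q'_0,\dots,Q'_p=Q'$ such that $P_{i-1}\xrightarrow[\vec d_i]{\vec\iota}P_i$ and $Q_{i-1}\xrightarrow[\vec\iota]{\vec d_i}Q_i$ for $1\le i\le n$, $P_n\xrightarrow[\vec c]{\vec a}P'_0$ and $Q_n\xrightarrow[\vec b]{\vec c}Q'_0$, and $P'_{j-1}\xrightarrow[\vec e_j]{\vec\iota}P'_j$ and $Q'_{j-1}\xrightarrow[\vec\iota]{\vec e_j}Q'_j$ for $1\le j\le p$. (ii) If $P\otimes Q\xrightarrow[\vec b]{\vec a}R$ (here $P:(k,l)$, $Q:(l,m)$ arbitrary closed terms) then $R=P'\otimes Q'$ and there exist transitions $P\xrightarrow[\vec b_1]{\vec a_1}P'$ and $Q\xrightarrow[\vec b_2]{\vec a_2}Q'$ with $\vec a=\vec a_1\vec a_2$ and $\vec b=\vec b_1\vec b_2$.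
   Context: Wire calculus. Fix a set $\Sigma$ of signals and a symbol $\iota\notin\Sigma$ (''no signal''); $L=\Sigma\cup\{\iota\}$; $\vec\iota$ denotes a word consisting only of $\iota$'s (of the appropriate length). Prefix strings are words over the atoms: signal variables $x$, binders $\lambda x$, $\iota$, and constants $\sigma\in\Sigma$. Terms: $P::= Y \mid P\mathrel{;}P\mid P\otimes P\mid \frac{u}{v}.P\mid P+P\mid \mu Y{:}\tau.P$, with $Y$ process variables, $u,v$ prefix strings, $\tau$ a sort $(k,l)$. In $\frac{u}{v}.P$ the variables $x$ with $\lambda x$ in $uv$ are bound in $P$ (set $bd$), others occurring in $uv$ are free ($fr$). Sorting: $Y$ has its declared sort; $P:(k,n),R:(n,l)\Rightarrow P\mathrel{;}R:(k,l)$; $P:(k,l),Q:(m,n)\Rightarrow P\otimes Q:(k+m,l+n)$; $P:\tau$ under $Y{:}\tau'$ gives $\mu Y{:}\tau'.P:\tau$; if $|u|=k,|v|=l$, $fr\cap bd=\varnothing$, $fr$ in context and $P:(k,l)$ then $\frac{u}{v}.P:(k,l)$; $P,Q:\tau\Rightarrow P+Q:\tau$. Only closed terms are considered, up to renaming of bound variables. Transitions $P\xrightarrow[\vec b]{\vec a}Q$ (upper label $\vec a\in L^k$, lower $\vec b\in L^l$ for $P:(k,l)$) are generated by: (Refl) $P\xrightarrow[\vec\iota]{\vec\iota}P$; ($\iota$L) $P\xrightarrow[\vec\iota]{\vec\iota}R$, $R\xrightarrow[\vec b]{\vec a}Q$ give $P\xrightarrow[\vec b]{\vec a}Q$; ($\iota$R)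 $P\xrightarrow[\vec b]{\vec a}R$, $R\xrightarrow[\vec\iota]{\vec\iota}Q$ give $P\xrightarrow[\vec b]{\vec a}Q$; (Cut) $P\xrightarrow[\vec c]{\vec a}Q$, $R\xrightarrow[\vec b]{\vec c}S$ give $P\mathrel{;}R\xrightarrow[\vec b]{\vec a}Q\mathrel{;}S$; (Ten) $P\xrightarrow[\vec b]{\vec a}Q$, $R\xrightarrow[\vec d]{\vec c}S$ give $P\otimes R\xrightarrow[\vec b\vec d]{\vec a\vec c}Q\otimes S$; (Pref) for each $\sigma:bd\to L$, $\frac{u}{v}.P\xrightarrow[v|_\sigma]{u|_\sigma}P|_\sigma$; (Rec) $P[\mu Y.P/Y]\xrightarrow[\vec b]{\vec a}Q$ gives $\mu Y.P\xrightarrow[\vec b]{\vec a}Q$; ($+\iota$) $P\xrightarrow[\vec\iota]{\vec\iota}Q$, $R\xrightarrow[\vec\iota]{\vec\iota}S$ give $P+R\xrightarrow[\vec\iota]{\vec\iota}Q+S$; ($+$L/$+$R) $P\xrightarrow[\vec b]{\vec a}Q$ with $\vec a\vec b$ not all $\iota$ gives $P+R\xrightarrow[\vec b]{\vec a}Q$ and $R+P\xrightarrow[\vec b]{\vec a}Q$. *)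

(* Defs.v *)
From Stdlib Require Import List Arith.
Import ListNotations.
Set Implicit Arguments.

Section Wire.
Variable Sigma : Type.

(* L = Sigma + {iota}; iota is represented by None. *)
Definition lab : Type := option Sigma.
Definition word : Type := list lab.
Definition iota : lab := None.
Definition iotas (n : nat) : word := repeat None n.
Definition all_iota (w : word) : Prop := Forall (fun x => x = None) w.

Definition sort : Type := (nat * nat)%type.

(* prefix atoms: signal variable x, binder \lambda x, value in L
   (AVal None = iota, AVal (Some s) = constant s) *)
Inductive atom : Type :=
| AVar (x : nat)
| ABind (x : nat)
| AVal (a : lab).

Inductive term : Type :=
| TVar (Y : nat)
| TSeq (P R : term)
| TTen (P R : term)
| TPre (u v : list atom) (P : term)
| TSum (P R : term)
| TMu (Y : nat) (tau : sort) (P : term).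

Definition atom_bd (a : atom) : list nat :=
  match a with ABind x => [x] | _ => [] end.
Definition atom_fr (a : atom) : list nat :=
  match a with AVar x => [x] | _ => [] end.

Definition bd (u v : list atom) : list nat := flat_map atom_bd (u ++ v).
Definition fr (u v : list atom) : list nat := flat_map atom_fr (u ++ v).

Definition memb (x : nat) (s : list nat) : bool := existsb (Nat.eqb x) s.

Fixpoint lookup (Y : nat) (G : list (nat * sort)) : option sort :=
  match G with
  | [] => None
  | (Z, t) :: G' => if Nat.eqb Y Z then Some t else lookup Y G'
  end.

(* sorting judgment: G = process-variable context, X = signal variables in scope *)
Inductive wt : list (nat * sort) -> list nat -> term -> sort -> Prop :=
| wt_var G X Y tau : lookup Y G = Some tau -> wt G X (TVar Y) tau
| wt_seq G X P R k n l :
    wt G X P (k, n) -> wt G X R (n, l) -> wt G X (TSeq P R) (k, l)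
| wt_ten G X P Q k l m n :
    wt G X P (k, l) -> wt G X Q (m, n) -> wt G X (TTen P Q) (k + m, l + n)
| wt_mu G X Y P tau :
    wt ((Y, tau) :: G) X P tau -> wt G X (TMu Y tau P) tau
| wt_pre G X u v P :
    (forall x, In x (fr u v) -> ~ In x (bd u v)) ->
    (forall x, In x (fr u v) -> In x X) ->
    wt G (bd u v ++ X) P (length u, length v) ->
    wt G X (TPre u v P) (length u, length v)
| wt_sum G X P Q tau :
    wt G X P tau -> wt G X Q tau -> wt G X (TSum P Q) tau.

Definition closed (P : term) (tau : sort) : Prop := wt [] [] P tau.

Definition asub (s : nat -> option lab) (a : atom) : atom :=
  match a with
  | AVar x => match s x with Some c => AVal c | None => AVar x end
  | _ => a
  end.

Fixpoint ssub (s : nat -> option lab) (P : term) : term :=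
  match P with
  | TVar Y => TVar Y
  | TSeq P1 P2 => TSeq (ssub s P1) (ssub s P2)
  | TTen P1 P2 => TTen (ssub s P1) (ssub s P2)
  | TSum P1 P2 => TSum (ssub s P1) (ssub s P2)
  | TMu Y tau P1 => TMu Y tau (ssub s P1)
  | TPre u v P1 =>
      let s' := fun x => if memb x (bd u v) then None else s x in
      TPre (map (asub s') u) (map (asub s') v) (ssub s' P1)
  end.

Definition inst (sg : nat -> lab) (u : list atom) : word :=
  map (fun a => match a with AVar x => sg x | ABind x => sg x | AVal c => c end) u.

Definition restr (u v : list atom) (sg : nat -> lab) (P : term) : term :=
  ssub (fun x => if memb x (bd u v) then Some (sg x) else None) P.

(* process substitution P[R/Y] (R closed, so no capture) *)
Fixpoint psub (Y : nat) (R : term) (P : term) : term :=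
  match P with
  | TVar Z => if Nat.eqb Z Y then R else TVar Z
  | TSeq P1 P2 => TSeq (psub Y R P1) (psub Y R P2)
  | TTen P1 P2 => TTen (psub Y R P1) (psub Y R P2)
  | TSum P1 P2 => TSum (psub Y R P1) (psub Y R P2)
  | TPre u v P1 => TPre u v (psub Y R P1)
  | TMu Z tau P1 => if Nat.eqb Z Y then TMu Z tau P1 else TMu Z tau (psub Y R P1)
  end.

(* transitions  P --a/b--> Q  (upper label a, lower label b) *)
Inductive step : term -> word -> word -> term -> Prop :=
| st_refl P k l : closed P (k, l) -> step P (iotas k) (iotas l) P
| st_iotaL P R Q i j a b :
    all_iota i -> all_iota j -> step P i j R -> step R a b Q -> step P a b Q
| st_iotaR P R Q i j a b :
    all_iota i -> all_iota j -> step P a b R -> step R i j Q -> step P a b Q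
| st_cut P Q R S a b c :
    step P a c Q -> step R c b S -> step (TSeq P R) a b (TSeq Q S)
| st_ten P Q R S a b c d :
    step P a b Q -> step R c d S -> step (TTen P R) (a ++ c) (b ++ d) (TTen Q S)
| st_pref u v P (sg : nat -> lab) :
    step (TPre u v P) (inst sg u) (inst sg v) (restr u v sg P)
| st_rec Y tau P a b Q :
    step (psub Y (TMu Y tau P) P) a b Q -> step (TMu Y tau P) a b Q
| st_sumiota P Q R S i j :
    all_iota i -> all_iota j -> step P i j Q -> step R i j S ->
    step (TSum P R) i j (TSum Q S)
| st_sumL P Q R a b :
    step P a b Q -> ~ all_iota (a ++ b) -> step (TSum P R) a b Q
| st_sumR P Q R a b :
    step P a b Q -> ~ all_iota (a ++ b) -> step (TSum R P) a b Q.

End Wire.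

(* Main.v *)
Require Import Defs.
From Stdlib Require Import List Arith Lia.
Import ListNotations.

Section S.
Variable Sigma : Type.

Lemma memb_in x s : memb x s = true -> In x s.
Proof. unfold memb. intro H. apply existsb_exists in H as [y [Hy E]].
  apply Nat.eqb_eq in E. subst; auto. Qed.

Lemma in_memb x s : In x s -> memb x s = true.
Proof. intro H. unfold memb. apply existsb_exists. exists x. split; auto. apply Nat.eqb_refl. Qed.

Lemma bd_map (s : nat -> option (lab Sigma)) (w : list (atom Sigma)) :
  flat_map (@atom_bd Sigma) (map (asub s) w) = flat_map (@atom_bd Sigma) w.
Proof. induction w as [|a w IH]; simpl; auto. rewrite IH.
  destruct a; simpl; auto. destruct (s x); simpl; auto. Qed.

Lemma fr_map (s : nat -> option (lab Sigma)) (w : list (atom Sigma)) x :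
  In x (flat_map (@atom_fr Sigma) (map (asub s) w)) ->
  In x (flat_map (@atom_fr Sigma) w) /\ s x = None.
Proof. induction w as [|a w IH]; simpl; [tauto|]. intro H.
  destruct a; simpl in *.
  - destruct (s x0) eqn:E; simpl in *.
    + destruct (IH H); auto.
    + destruct H as [<-|H]; auto. destruct (IH H); auto.
  - destruct (IH H); auto.
  - destruct (IH H); auto. Qed.

Lemma wt_weakG : forall G X (P : term Sigma) t, wt G X P t ->
  forall G', (forall Y s, lookup Y G = Some s -> lookup Y G' = Some s) -> wt G' X P t.
Proof.
  induction 1; intros G' HG; econstructor; eauto.
  apply IHwt. intros Z s. simpl. destruct (Nat.eqb Z Y); auto.
Qed.

Lemma wt_weakX : forall G X (P : term Sigma) t, wt G X P t ->
  forall X', incl X X' -> wt G X' P t.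
Proof.
  induction 1; intros X' HX; econstructor; eauto.
  apply IHwt. apply incl_app_app; auto. apply incl_refl.
Qed.

Lemma wt_closed G X (R : term Sigma) t : closed R t -> wt G X R t.
Proof. intro H. eapply wt_weakX. eapply wt_weakG. exact H.
  simpl; discriminate. intros x []. Qed.

Lemma wt_psub : forall G X (P : term Sigma) t, wt G X P t ->
  forall Y R tau G', lookup Y G = Some tau -> closed R tau ->
  (forall Z s, Z <> Y -> lookup Z G = Some s -> lookup Z G' = Some s) ->
  wt G' X (psub Y R P) t.
Proof.
  induction 1; intros Y0 R0 tau0 G' HY HR HG; simpl.
  - destruct (Nat.eqb_spec Y Y0).
    + subst. rewrite HY in H. injection H as <-. apply wt_closed; auto.
    + constructor. auto.
  - econstructor; eauto.
  - econstructor; eauto.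
  - destruct (Nat.eqb_spec Y Y0).
    + subst. constructor. eapply wt_weakG; eauto.
      intros Z s. simpl. destruct (Nat.eqb_spec Z Y0); auto.
    + constructor. eapply IHwt; eauto.
      simpl. destruct (Nat.eqb_spec Y0 Y); [congruence|auto].
      intros Z s HZ. simpl. destruct (Nat.eqb Z Y); auto.
  - econstructor; eauto.
  - econstructor; eauto.
Qed.

Lemma wt_ssub : forall G X (P : term Sigma) t, wt G X P t ->
  forall s X', (forall x, In x X -> s x = None -> In x X') -> wt G X' (ssub s P) t.
Proof.
  induction 1; intros s X' HX; simpl.
  - constructor; auto.
  - econstructor; eauto.
  - econstructor; eauto.
  - econstructor; eauto.
  - set (s' := fun x => if memb x (bd u v) then None else s x).
    assert (Hbd : bd (map (asub s') u) (map (asub s') v) = bd u v).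
    { unfold bd. rewrite <- !map_app. apply bd_map. }
    assert (Hfr : forall x, In x (fr (map (asub s') u) (map (asub s') v)) ->
              In x (fr u v) /\ s' x = None).
    { intros x Hx. unfold fr in Hx. rewrite <- map_app in Hx. apply fr_map in Hx. exact Hx. }
    replace (length u, length v) with (length (map (asub s') u), length (map (asub s') v))
      by (rewrite !length_map; auto).
    apply wt_pre.
    + intros x Hx. rewrite Hbd. apply Hfr in Hx as [Hx _]. auto.
    + intros x Hx. apply Hfr in Hx as [Hx Hs]. apply HX; auto.
      unfold s' in Hs. destruct (memb x (bd u v)) eqn:E; auto.
      apply memb_in in E. exfalso; eapply H; eauto.
    + rewrite Hbd, !length_map. apply IHwt.
      intros x Hx Hs. apply in_app_or in Hx as [Hx|Hx]; apply in_or_app; auto.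
      unfold s' in Hs. destruct (memb x (bd u v)) eqn:E; auto.
      left; apply memb_in; auto.
  - econstructor; eauto.
Qed.

Lemma wt_uniq : forall G X (P : term Sigma) t, wt G X P t ->
  forall X' t', wt G X' P t' -> t = t'.
Proof.
  induction 1; intros X' t' H'; inversion H'; subst; auto.
  - congruence.
  - apply IHwt1 in H5. apply IHwt2 in H7. congruence.
  - apply IHwt1 in H5. apply IHwt2 in H7. congruence.
  - eauto.
Qed.

Lemma all_iota_iotas (w : word Sigma) n : all_iota w -> length w = n -> w = iotas Sigma n.
Proof. revert n; induction w; intros n H1 H2; simpl in *; subst; auto.
  inversion H1; subst. unfold iotas. simpl. f_equal. apply IHw; auto. Qed.

Lemma SR : forall (P : term Sigma) a b Q, step P a b Q -> forall k l, closed P (k,l) ->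
  closed Q (k,l) /\ length a = k /\ length b = l.
Proof.
  induction 1; intros k0 l0 HC.
  - pose proof (wt_uniq _ _ _ _ H _ _ HC) as E. injection E as -> ->.
    unfold iotas. rewrite !repeat_length. auto.
  - destruct (IHstep1 _ _ HC) as [HR _]. apply IHstep2; auto.
  - destruct (IHstep1 _ _ HC) as [HR [Ha Hb]]. destruct (IHstep2 _ _ HR) as [? _]. auto.
  - inversion HC; subst. destruct (IHstep1 _ _ H6) as [? [? ?]].
    destruct (IHstep2 _ _ H8) as [? [? ?]]. subst. split; auto. econstructor; eauto.
  - inversion HC; subst. destruct (IHstep1 _ _ H6) as [? [? ?]].
    destruct (IHstep2 _ _ H8) as [? [? ?]]. subst.
    rewrite !length_app. split; auto. econstructor; eauto.
  - inversion HC; subst. unfold inst. rewrite !length_map. split; [|split; reflexivity].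
    unfold restr, closed. eapply wt_ssub. exact H8.
    intros x Hx Hs. rewrite app_nil_r in Hx. apply in_memb in Hx. rewrite Hx in Hs. discriminate.
  - inversion HC; subst. apply IHstep. unfold closed. eapply wt_psub; [exact H6 | | exact HC | ].
    simpl. rewrite Nat.eqb_refl. reflexivity. intros Z s HZ Hs. simpl in Hs.
    destruct (Nat.eqb_spec Z Y); [congruence|discriminate].
  - inversion HC; subst. destruct (IHstep1 _ _ H7) as [? [? ?]].
    destruct (IHstep2 _ _ H9) as [? [? ?]]. split; auto. constructor; auto.
  - inversion HC; subst. eauto.
  - inversion HC; subst. eauto.
Qed.


Inductive ich (k l m : nat) : term Sigma -> term Sigma -> term Sigma -> term Sigma -> Prop :=
| ich0 P Q : ich k l m P Q P Q
| ichS P Q P1 Q1 P2 Q2 (d : word Sigma) : length d = l ->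
    step P (iotas Sigma k) d P1 -> step Q d (iotas Sigma m) Q1 ->
    ich k l m P1 Q1 P2 Q2 -> ich k l m P Q P2 Q2.

Lemma ich_trans k l m P Q P1 Q1 P2 Q2 : ich k l m P Q P1 Q1 -> ich k l m P1 Q1 P2 Q2 ->
  ich k l m P Q P2 Q2.
Proof. induction 1; intros; auto. econstructor; eauto. Qed.

Lemma ich_fun k l m P Q P' Q' : ich k l m P Q P' Q' ->
  exists n (d : nat -> word Sigma) (Ps Qs : nat -> term Sigma),
    Ps 0 = P /\ Qs 0 = Q /\ Ps n = P' /\ Qs n = Q' /\
    (forall i, 1 <= i <= n ->
          length (d i) = l /\
          step (Ps (i - 1)) (iotas Sigma k) (d i) (Ps i) /\
          step (Qs (i - 1)) (d i) (iotas Sigma m) (Qs i)).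
Proof.
  induction 1.
  - exists 0, (fun _ => nil), (fun _ => P), (fun _ => Q). repeat split; auto; lia.
  - destruct IHich as [n [dd [Ps [Qs [H3 [H4 [H5 [H6 H7]]]]]]]].
    exists (S n), (fun i => match i with 0 => d | S j => match j with 0 => d | S _ => dd j end end),
      (fun i => match i with 0 => P | S j => Ps j end),
      (fun i => match i with 0 => Q | S j => Qs j end).
    split; [reflexivity|]. split; [reflexivity|]. split; [assumption|]. split; [assumption|].
    intros i Hi. destruct i as [|i]; [lia|]. replace (S i - 1) with i by lia.
    destruct i as [|j].
    + cbn. rewrite H3, H4. auto.
    + cbn. destruct (H7 (S j)) as [A [B C]]; [lia|].
      replace (S j - 1) with j in * by lia. auto.
Qed.

Lemma seq_main k l m : forall (X : term Sigma) a b R, step X a b R ->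
  forall P Q, X = TSeq P Q -> closed P (k,l) -> closed Q (l,m) ->
  exists P' Q', R = TSeq P' Q' /\ closed P' (k,l) /\ closed Q' (l,m) /\
  exists Pn Qn P0 Q0 (c : word Sigma), ich k l m P Q Pn Qn /\ length c = l /\
    step Pn a c P0 /\ step Qn c b Q0 /\ ich k l m P0 Q0 P' Q'.
Proof.
  induction 1; intros P0 Q0 HX HP HQ; try discriminate.
  - subst. inversion H; subst.
    pose proof (wt_uniq _ _ _ _ HP _ _ H5) as E1. injection E1 as <- <-.
    pose proof (wt_uniq _ _ _ _ HQ _ _ H7) as E1. injection E1 as <-.
    exists P0, Q0. split; auto. split; auto. split; auto.
    exists P0, Q0, P0, Q0, (iotas Sigma l). repeat split; try constructor.
    + unfold iotas; apply repeat_length.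
    + exact HP.
    + exact HQ.
  - subst. assert (HC : closed (TSeq P0 Q0) (k, m)) by (econstructor; eauto).
    destruct (SR _ _ _ _ H1 _ _ HC) as [_ [Hi Hj]].
    apply (all_iota_iotas _ _ H) in Hi. apply (all_iota_iotas _ _ H0) in Hj. subst.
    destruct (IHstep1 P0 Q0 eq_refl HP HQ) as [P1 [Q1 [-> [HP1 [HQ1 [Pn [Qn [Pa [Qa [c [C1 [Lc [S1 [S2 C2]]]]]]]]]]]]]].
    destruct (IHstep2 P1 Q1 eq_refl HP1 HQ1) as [P' [Q' [-> [HP' [HQ' [An [Bn [A0 [B0 [c2 [D1 [Lc2 [T1 [T2 D2]]]]]]]]]]]]]].
    exists P', Q'. split; auto. split; auto. split; auto.
    exists An, Bn, A0, B0, c2. repeat split; auto.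
    eapply ich_trans; [exact C1|]. eapply ichS with (P1:=Pa) (Q1:=Qa); [exact Lc|exact S1|exact S2|]. eapply ich_trans; [exact C2|exact D1].
  - subst. assert (HC : closed (TSeq P0 Q0) (k, m)) by (econstructor; eauto).
    destruct (IHstep1 P0 Q0 eq_refl HP HQ) as [P1 [Q1 [-> [HP1 [HQ1 [Pn [Qn [Pa [Qa [c [C1 [Lc [S1 [S2 C2]]]]]]]]]]]]]].
    assert (HC1 : closed (TSeq P1 Q1) (k, m)) by (econstructor; eauto).
    destruct (SR _ _ _ _ H2 _ _ HC1) as [_ [Hi Hj]].
    apply (all_iota_iotas _ _ H) in Hi. apply (all_iota_iotas _ _ H0) in Hj. subst.
    destruct (IHstep2 P1 Q1 eq_refl HP1 HQ1) as [P' [Q' [-> [HP' [HQ' [An [Bn [A0 [B0 [c2 [D1 [Lc2 [T1 [T2 D2]]]]]]]]]]]]]].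
    exists P', Q'. split; auto. split; auto. split; auto.
    exists Pn, Qn, Pa, Qa, c. repeat split; auto.
    eapply ich_trans; [exact C2|]. eapply ich_trans; [exact D1|]. eapply ichS with (P1:=A0) (Q1:=B0); [exact Lc2|exact T1|exact T2|exact D2].
  - injection HX as -> ->.
    destruct (SR _ _ _ _ H _ _ HP) as [HQ' [_ Hc]]. subst.
    destruct (SR _ _ _ _ H0 _ _ HQ) as [HS _].
    exists Q, S. split; auto. split; auto. split; auto.
    exists P0, Q0, Q, S, c. repeat split; auto; constructor.
Qed.

Lemma ten_main : forall (X : term Sigma) a b R, step X a b R ->
  forall P Q, X = TTen P Q ->
  exists P' Q', R = TTen P' Q' /\
     exists a1 a2 b1 b2 : word Sigma,
       step P a1 b1 P' /\ step Q a2 b2 Q' /\ a = a1 ++ a2 /\ b = b1 ++ b2.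
Proof.
  induction 1; intros P0 Q0 HX; try discriminate.
  - subst. inversion H; subst. exists P0, Q0. split; auto.
    exists (iotas Sigma k0), (iotas Sigma m), (iotas Sigma l0), (iotas Sigma n).
    split; [constructor; auto|]. split; [constructor; auto|].
    unfold iotas; rewrite !repeat_app; auto.
  - destruct (IHstep1 P0 Q0 HX) as [P1 [Q1 [-> [a1 [a2 [b1 [b2 [S1 [S2 [-> ->]]]]]]]]]].
    destruct (IHstep2 P1 Q1 eq_refl) as [P' [Q' [-> [c1 [c2 [d1 [d2 [T1 [T2 [-> ->]]]]]]]]]].
    apply Forall_app in H as [Ha1 Ha2]. apply Forall_app in H0 as [Hb1 Hb2].
    exists P', Q'. split; auto. exists c1, c2, d1, d2. split; [|split]; auto.
    + eapply st_iotaL; [exact Ha1|exact Hb1|exact S1|exact T1].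
    + eapply st_iotaL; [exact Ha2|exact Hb2|exact S2|exact T2].
  - destruct (IHstep1 P0 Q0 HX) as [P1 [Q1 [-> [a1 [a2 [b1 [b2 [S1 [S2 [-> ->]]]]]]]]]].
    destruct (IHstep2 P1 Q1 eq_refl) as [P' [Q' [-> [c1 [c2 [d1 [d2 [T1 [T2 [E1 E2]]]]]]]]]].
    rewrite E1 in H. rewrite E2 in H0.
    apply Forall_app in H as [Ha1 Ha2]. apply Forall_app in H0 as [Hb1 Hb2].
    exists P', Q'. split; auto. exists a1, a2, b1, b2. split; [|split]; auto.
    + eapply st_iotaR; [exact Ha1|exact Hb1|exact S1|exact T1].
    + eapply st_iotaR; [exact Ha2|exact Hb2|exact S2|exact T2].
  - injection HX as -> ->. exists Q, S. split; auto. exists a, c, b, d. auto.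
Qed.

End S.

Theorem mainTheorem2 (Sigma : Type) (P Q : term Sigma) (k l m : nat) :
  closed P (k, l) -> closed Q (l, m) ->
  (* (i) *)
  (forall (a b : word Sigma) (R : term Sigma),
     step (TSeq P Q) a b R ->
     exists P' Q', R = TSeq P' Q' /\
     exists (n p : nat) (d : nat -> word Sigma) (c : word Sigma) (e : nat -> word Sigma)
            (Ps Qs Ps' Qs' : nat -> term Sigma),
       Ps 0 = P /\ Qs 0 = Q /\ Ps' p = P' /\ Qs' p = Q' /\
       (forall i, 1 <= i <= n ->
          length (d i) = l /\
          step (Ps (i - 1)) (iotas Sigma k) (d i) (Ps i) /\
          step (Qs (i - 1)) (d i) (iotas Sigma m) (Qs i)) /\
       length c = l /\
       step (Ps n) a c (Ps' 0) /\ step (Qs n) c b (Qs' 0) /\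
       (forall j, 1 <= j <= p ->
          length (e j) = l /\
          step (Ps' (j - 1)) (iotas Sigma k) (e j) (Ps' j) /\
          step (Qs' (j - 1)) (e j) (iotas Sigma m) (Qs' j))) /\
  (* (ii) *)
  (forall (a b : word Sigma) (R : term Sigma),
     step (TTen P Q) a b R ->
     exists P' Q', R = TTen P' Q' /\
     exists a1 a2 b1 b2 : word Sigma,
       step P a1 b1 P' /\ step Q a2 b2 Q' /\ a = a1 ++ a2 /\ b = b1 ++ b2).
Proof.
  intros HP HQ. split.
  - intros a b R H.
    destruct (seq_main Sigma k l m _ _ _ _ H _ _ eq_refl HP HQ) as [P' [Q' [-> [_ [_ [Pn [Qn [P0 [Q0 [c [C1 [Lc [S1 [S2 C2]]]]]]]]]]]]]].
    exists P', Q'. split; auto.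
    destruct (ich_fun Sigma _ _ _ _ _ _ _ C1) as [n [d [Ps [Qs [E1 [E2 [E3 [E4 F]]]]]]]].
    destruct (ich_fun Sigma _ _ _ _ _ _ _ C2) as [p [e [Ps' [Qs' [G1 [G2 [G3 [G4 F']]]]]]]].
    exists n, p, d, c, e, Ps, Qs, Ps', Qs'.
    rewrite E3, E4, G1, G2. repeat split; auto.
    all: try (apply F; auto); try (apply F'; auto).
  - intros a b R H. exact (ten_main Sigma _ _ _ _ H _ _ eq_refl).
Qed.
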